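(* Let $n\ge 3$ and let $c=(c_1,\dots,c_n)\in\{-1,+1\}^n$ be such that the cyclic sequence $(c_1,\dots,c_n,-c_1,\dots,-c_n)$ of length $2n$ contains no $n-1$ cyclically consecutive equal entries. For real angles $\varphi_2,\dots,\varphi_n$ let $C(\varphi)$ be the real $2\times(n-1)$ matrix with columns indexed by $j=2,\dots,n$ and entries \[ C_{1j}=(c_j-c_{j-1})\sin\varphi_j,\qquad C_{2j}=(c_{j-1}-c_j)\cos\varphi_j . \] If $0<\varphi_2<\varphi_3<\dots<\varphi_n<\pi$, then $C(\varphi)$ has rank two.
   Context: $C(\varphi)$ is the Jacobian with respect to $(\varphi_2,\dots,\varphi_n)$ of the constraint functions $g_1(\varphi)=\sum_{j=2}^n (c_{j-1}-c_j)\cos\varphi_j-(c_1+c_n)$ and $g_2(\varphi)=\sum_{j=2}^n (c_{j-1}-c_j)\sin\varphi_j$. The hypothesis on $c$ expresses that $c$ is a code of a polygon (at most $n-2$ cyclically consecutive equal signs in the extended sequence of length $2n$). *)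

(* Defs.v *)
From HB Require Import structures.
From mathcomp Require Import all_boot all_order all_algebra.
From mathcomp Require Import all_classical all_reals all_analysis.
Set Implicit Arguments. Unset Strict Implicit. Unset Printing Implicit Defensive.
Import Order.TTheory GRing.Theory Num.Theory.
Local Open Scope ring_scope.

(* Paper indexing is kept: c i for 1 <= i <= n, phi j for 2 <= j <= n. *)

(* Extended cyclic sequence (c_1,...,c_n,-c_1,...,-c_n), indexed by k = 0..2n-1. *)
Definition ext_code (R : ringType) (n : nat) (c : nat -> R) (k : nat) : R :=
  if (k < n)%N then c k.+1 else - c (k - n).+1.

Definition no_long_run (R : ringType) (n : nat) (c : nat -> R) : Prop :=
  forall i : nat, (i < 2 * n)%N ->
    ~ (forall t : nat, (t < n - 1)%N ->
         ext_code n c ((i + t) %% (2 * n)) = ext_code n c i).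

Definition Cmat (R : realType) (n : nat) (c phi : nat -> R) : 'M[R]_(2, n.-1) :=
  \matrix_(i < 2, k < n.-1)
    (let j := (k + 2)%N in
     if i == 0 :> nat then (c j - c j.-1) * sin (phi j)
     else (c j.-1 - c j) * cos (phi j)).

(* Main.v *)
Require Import Defs.
From HB Require Import structures.
From mathcomp Require Import all_boot all_order all_algebra.
From mathcomp Require Import all_classical all_reals all_analysis.
From mathcomp Require Import zify ring.
Import Order.TTheory GRing.Theory Num.Theory.
Local Open Scope ring_scope.

Lemma const_run (R : realType) (c : nat -> R) (a b : nat) :
  (forall i, (a < i <= b)%N -> c i = c i.-1) ->
  forall i, (a <= i <= b)%N -> c i = c a.
Proof.
move=> H; elim=> [|i IH] hi.
  by have -> : a = 0%N by lia.
have [->|ne] := eqVneq a i.+1; first by [].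
rewrite H /=; last by lia.
by apply: IH; lia.
Qed.

Lemma two_changes {R : realType} {n : nat} {c : nat -> R} :
  (3 <= n)%N ->
  (forall i : nat, (1 <= i <= n)%N -> c i = 1 \/ c i = -1) ->
  no_long_run n c ->
  exists j k, [/\ (2 <= j)%N, (j < k)%N, (k <= n)%N, c j != c j.-1 & c k != c k.-1].
Proof.
move=> n3 hc hnl.
case: (pselect (exists j k, [/\ (2 <= j)%N, (j < k)%N, (k <= n)%N, c j != c j.-1 & c k != c k.-1])) => // Hno.
exfalso.
case: (pselect (exists j, (2 <= j <= n)%N /\ c j != c j.-1)) => [[j0 [hj0 cj0]]|H0].
- have Hk : forall k, (2 <= k <= n)%N -> k != j0 -> c k = c k.-1.
    move=> k hk kne; apply/eqP; apply/negPn/negP => ck.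
    have [lt|gt] : (k < j0)%N \/ (j0 < k)%N by lia.
      by apply: Hno; exists k, j0; split => //; lia.
    by apply: Hno; exists j0, k; split => //; lia.
  have L1 : forall i, (1 <= i <= j0.-1)%N -> c i = c 1%N.
    apply: const_run => i hi; apply: Hk; lia.
  have L2 : forall i, (j0 <= i <= n)%N -> c i = c j0.
    apply: const_run => i hi; apply: Hk; lia.
  have e1 : c j0.-1 = c 1%N by apply: L1; lia.
  have cj : c j0 = - c 1%N.
    move: cj0; rewrite e1.
    have := hc j0 ltac:(lia); have := hc 1%N ltac:(lia).
    by case=> ->; case=> -> //; rewrite ?opprK ?eqxx.
  apply: (hnl j0.-1 ltac:(lia)) => t ht.
  rewrite modn_small; last by lia.
  rewrite /ext_code.
  have -> : (j0.-1 < n)%N by lia.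
  have -> : (j0.-1).+1 = j0 by lia.
  case: ifP => hm.
    by apply: L2; lia.
  rewrite L1; last by lia.
  by rewrite cj.
- apply: (hnl 0%N ltac:(lia)) => t ht.
  rewrite modn_small; last by lia.
  rewrite /ext_code add0n.
  have -> : (t < n)%N by lia.
  have -> : (0 < n)%N by lia.
  apply: (@const_run _ c 1%N n) ; last by lia.
  move=> i hi; apply/eqP; apply/negPn/negP => ci.
  by apply: H0; exists i; split => //; lia.
Qed.

Lemma phi_mono (R : realType) (n : nat) (phi : nat -> R) :
  (forall j : nat, (2 <= j)%N -> (j < n)%N -> phi j < phi j.+1) ->
  forall a d, (2 <= a)%N -> (a + d.+1 <= n)%N -> phi a < phi (a + d.+1)%N.
Proof.
move=> H a; elim=> [|d IH] ha hd.
  by rewrite addnS addn0; apply: H; lia.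
apply: (lt_trans (IH ha ltac:(lia))).
rewrite (addnS a d.+1); apply: H; lia.
Qed.

Lemma phi_le (R : realType) (n : nat) (phi : nat -> R) :
  (forall j : nat, (2 <= j)%N -> (j < n)%N -> phi j < phi j.+1) ->
  forall a b, (2 <= a)%N -> (a < b)%N -> (b <= n)%N -> phi a < phi b.
Proof.
move=> H a b ha hab hb.
have -> : b = (a + (b - a.+1).+1)%N by lia.
by apply: (phi_mono _ _ _ H) => //; lia.
Qed.

Theorem lemma2 (R : realType) (n : nat) (c phi : nat -> R) :
  (3 <= n)%N ->
  (forall i : nat, (1 <= i <= n)%N -> c i = 1 \/ c i = -1) ->
  no_long_run n c ->
  0 < phi 2%N ->
  (forall j : nat, (2 <= j)%N -> (j < n)%N -> phi j < phi j.+1) ->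
  phi n < pi ->
  \rank (Cmat n c phi) = 2%N.
Proof.
move=> n3 hc hnl p2 hphi pn.
have [j [k [hj hjk hk cj ck]]] := two_changes n3 hc hnl.
have ple : forall a, (2 <= a <= n)%N -> phi 2%N <= phi a /\ phi a <= phi n.
  move=> a ha; split.
    have [->|ne] := eqVneq a 2%N; first by [].
    by apply/ltW/(phi_le _ _ _ hphi) => //; lia.
  have [->|ne] := eqVneq a n; first by [].
  by apply/ltW/(phi_le _ _ _ hphi) => //; lia.
have pjk := phi_le _ _ _ hphi _ _ hj hjk hk.
have [pj1 pj2] := ple j ltac:(lia).
have [pk1 pk2] := ple k ltac:(lia).
have sgt : 0 < sin (phi k - phi j).
  apply: sin_gt0_pi; rewrite subr_gt0 pjk /=.
  apply: (le_lt_trans (y := phi n - phi 2%N)); first by apply: lerB.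
  by rewrite ltrBlDr; apply: (lt_le_trans pn); rewrite lerDl ltW.
case: n n3 hc hnl p2 hphi pn hk ple {pj2 pk2} => [|[|[|m]]] // n3 hc hnl p2 hphi pn hk ple.
set A := Cmat m.+3 c phi.
pose g (l : 'I_2) : 'I_(m.+2) := if l == 0 then inord (j - 2) else inord (k - 2).
have rA : (\rank A <= 2)%N by apply: rank_leq_row.
suff : (2 <= \rank A)%N by lia.
have hr : (\rank (colsub g A) <= \rank A)%N.
  by rewrite -{1}(mulmx1 A) -mulmx_colsub; exact: mxrankM_maxl.
apply: leq_trans hr; rewrite mxrank_unit // unitmxE unitfE.
rewrite (expand_det_row _ 0) !big_ord_recl big_ord0 /cofactor !det_mx11 !mxE /=.
have G : forall l : 'I_2, (g l + 2)%N = if (l : nat) == 0%N then j else k.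
  move=> [[|[|l']] hl] //=; rewrite /g /=; rewrite inordK; lia.
rewrite !G /= expr0 expr1 !mul1r.
have -> : (c j - c j.-1) * sin (phi j) * ((c k.-1 - c k) * cos (phi k)) +
  ((c k - c k.-1) * sin (phi k) * (-1 * ((c j.-1 - c j) * cos (phi j))) + 0)
  = (c j - c j.-1) * (c k - c k.-1) * sin (phi k - phi j).
  by rewrite sinB; ring.
rewrite mulf_neq0 ?subr_eq0 //; first by rewrite mulf_neq0 ?subr_eq0.
by rewrite gt_eqF.
Qed.
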